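(* Let $Y$ be a rate-one Yule process with $Y(0)=1$. For every $\delta\in(0,1/2)$ there exist positive constants $C_1,C_2,M_0$ (depending on $\delta$) such that for all $M\ge M_0$, $$\mathbb{P}\big(e^{-s}Y(s)\le e^{-\delta s}\text{ for some }s\ge M\big)\le C_1e^{-C_2M}.$$
   Context: A rate-one Yule process is a pure-birth continuous-time Markov chain on $\{1,2,\dots\}$ jumping from $k$ to $k+1$ at rate $k$. *)

(* Defs.v *)
From HB Require Import structures.
From mathcomp Require Import all_boot all_order all_algebra.
From mathcomp Require Import all_classical all_reals all_analysis.
Set Implicit Arguments. Unset Strict Implicit. Unset Printing Implicit Defensive.
Import Order.TTheory GRing.Theory Num.Theory.
Local Open Scope classical_set_scope.
Local Open Scope ring_scope.

Definition mutually_independent {d} {T : measurableType d} {R : realType}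
    (P : probability T R) (X : nat -> T -> R) : Prop :=
  forall (s : seq nat) (B : nat -> set R),
    uniq s -> (forall i, measurable (B i)) ->
    P (\big[setI/setT]_(i <- s) (X i @^-1` B i)) =
    (\prod_(i <- s) P (X i @^-1` B i))%E.

Definition exp_distributed {d} {T : measurableType d} {R : realType}
    (P : probability T R) (X : T -> R) (lam : R) : Prop :=
  P [set w | 0 < X w] = 1%E /\
  forall t : R, 0 <= t -> P [set w | t < X w] = (expR (- lam * t))%:E.

Definition jump_time {T : Type} {R : realType} (H : nat -> T -> R) (n : nat)
    (w : T) : R := \sum_(i < n) H i w.

(* Pure-birth path started at 1: state k is held during [T_{k-1}, T_k),
   so Y(s) = #{ n : T_n <= s } (extended-valued, +oo on explosion). *)
Definition birth_path {T : Type} {R : realType} (H : nat -> T -> R) (s : R)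
    (w : T) : \bar R := counting [set n : nat | jump_time H n w <= s].

(* H is the sequence of holding times of a rate-one Yule process with Y(0)=1:
   holding time in state k (= H (k-1)) is Exp(k), all independent. *)
Definition yule_holding_times {d} {T : measurableType d} {R : realType}
    (P : probability T R) (H : nat -> {RV P >-> R}) : Prop :=
  mutually_independent P (fun i => H i) /\
  forall i : nat, exp_distributed P (H i) i.+1%:R.

(* Main.v *)
Require Import Defs.
From HB Require Import structures.
From mathcomp Require Import all_boot all_order all_algebra.
From mathcomp Require Import all_classical all_reals all_analysis.
From mathcomp Require Import ring lra measurable_realfun.
Import Order.TTheory GRing.Theory Num.Theory.
Local Open Scope classical_set_scope.
Local Open Scope ring_scope.
Section Markov.
Context (R : realType) (d : measure_display) (T : measurableType d) (P : probability T R).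

Lemma markov_fin (I : finType) (a : I -> R) (E : I -> set T) (A : set T) (al : R) :
  (forall i, 0 <= a i) -> (forall i, measurable (E i)) -> measurable A -> 0 <= al ->
  (forall w, A w -> al <= \sum_i a i * \1_(E i) w) ->
  (al%:E * P A <= \sum_i (a i)%:E * P (E i))%E.
Proof.
move=> a0 mE mA al0 H.
have mind : forall B : set T, measurable B ->
   measurable_fun [set: T] ((fun w => (\1_B w : R)%:E) : T -> \bar R).
  move=> B mB; apply/measurable_EFinP; exact: measurable_indic.
rewrite -[A in P A]setIT -integral_indic//.
rewrite -ge0_integralZl_EFin. all: try (by move=> x _; rewrite lee_fin). all: try exact: mind. all: try exact: measurableT. 2: exact: al0.
have -> : (\sum_i (a i)%:E * P (E i) =
    \int[P]_(x in setT) (\sum_i (a i)%:E * (\1_(E i) x)%:E))%E.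
  rewrite ge0_integral_sum//; last 2 first.
  - move=> i; apply: emeasurable_funM => //; exact: mind.
  - by move=> i x _; rewrite -EFinM lee_fin mulr_ge0.
  apply: eq_bigr => i _; rewrite ge0_integralZl_EFin. all: try (by move=> x _; rewrite lee_fin). all: try exact: mind. all: try exact: measurableT. 2: exact: a0.
  by rewrite integral_indic// setIT.
apply: ge0_le_integral => //.
- by move=> x _; rewrite -EFinM lee_fin mulr_ge0.
- apply: emeasurable_funM => //; exact: mind.
- apply: emeasurable_sum => i; apply: emeasurable_funM => //; exact: mind.
- move=> x _; rewrite (eq_bigr (fun i => (a i * \1_(E i) x)%:E)) ?sumEFin; last by move=> *; rewrite EFinM.
  rewrite -EFinM lee_fin indicE; case: (boolP (x \in A)) => [/set_mem xA|_].
  + by rewrite mulr1; exact: H.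
  + by rewrite mulr0 sumr_ge0// => i _; rewrite mulr_ge0.
Qed.
End Markov.
Section Indep.
Context (R : realType) (d : measure_display) (T : measurableType d) (P : probability T R).
Context (X : nat -> T -> R) (mX : forall i, measurable_fun setT (X i))
  (indep : mutually_independent P X).

Lemma mpre i (B : set R) : measurable B -> measurable (X i @^-1` B).
Proof. by move=> mB; rewrite -[X in measurable X]setTI; exact: mX. Qed.

Definition Ev K N (B : nat -> nat -> set R) (v : {ffun 'I_K -> 'I_N}) :=
  \big[setI/setT]_(i < K) (X i @^-1` B i (v i)).
Arguments Ev {K N}.

Lemma prod_indic K (F : 'I_K -> set T) w :
  \prod_(i < K) (\1_(F i) w : R) = \1_(\big[setI/setT]_(i < K) F i) w.
Proof.
elim/big_rec2: _ => [|i r S _ ->]; first by rewrite indicE in_setT.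
by rewrite indicI.
Qed.

Lemma expand K N (c : nat -> nat -> R) (B : nat -> nat -> set R) w :
  \prod_(i < K) \sum_(n < N) c i n * \1_(B i n) (X i w) =
  \sum_(v : {ffun 'I_K -> 'I_N}) (\prod_(i < K) c i (v i)) * \1_(Ev B v) w.
Proof.
rewrite bigA_distr_bigA; apply: eq_bigr => v _; rewrite big_split /=.
congr (_ * _); rewrite /Ev -prod_indic; apply: eq_bigr => i _.
by rewrite !indicE.
Qed.

Lemma prob_Ev K N (B : nat -> nat -> set R) (v : {ffun 'I_K -> 'I_N}) :
  (forall i n, measurable (B i n)) ->
  P (Ev B v) = (\prod_(i < K) P (X i @^-1` B i (v i)))%E.
Proof.
move=> mB.
pose B' j := oapp (fun i : 'I_K => B j (v i)) setT (insub j).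
have mB' j : measurable (B' j) by rewrite /B'; case: insub => /=.
have Hi := indep (iota 0 K) B' (iota_uniq 0 K) mB'.
have E1 : \big[setI/setT]_(j <- iota 0 K) (X j @^-1` B' j) = Ev B v.
  have -> : iota 0 K = index_iota 0 K by rewrite /index_iota subn0.
  rewrite big_mkord /Ev; apply: eq_bigr => i _.
  by rewrite /B' valK.
rewrite -E1 Hi.
have -> : iota 0 K = index_iota 0 K by rewrite /index_iota subn0.
rewrite big_mkord; apply: eq_bigr => i _.
by rewrite /B' valK.
Qed.

Lemma chernoff_prod K N (c : nat -> nat -> R) (B : nat -> nat -> set R) (A : set T) al :
  (forall i n, 0 <= c i n) -> (forall i n, measurable (B i n)) -> measurable A -> 0 <= al ->
  (forall w, A w -> al <= \prod_(i < K) \sum_(n < N) c i n * \1_(B i n) (X i w)) ->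
  (al%:E * P A <= (\prod_(i < K) \sum_(n < N) c i n * fine (P (X i @^-1` B i n)))%:E)%E.
Proof.
move=> c0 mB mA al0 H.
have mEv v : measurable (@Ev K N B v).
  by apply: bigsetI_measurable => i _; exact: mpre.
apply: le_trans (@markov_fin _ _ _ P _ (fun v : {ffun 'I_K -> 'I_N} => \prod_(i < K) c i (v i))
   (@Ev K N B) A al _ _ mA al0 _) _.
- by move=> v; apply: prodr_ge0.
- exact: mEv.
- by move=> w Aw; rewrite -expand; exact: H.
rewrite bigA_distr_bigA -sumEFin le_eqVlt; apply/orP; left; apply/eqP.
apply: eq_bigr => v _; rewrite prob_Ev//.
rewrite (eq_bigr (fun i : 'I_K => (fine (P (X i @^-1` B i (v i))))%:E)); last first.
  by move=> i _; rewrite fineK//; apply: fin_num_measure; exact: mpre.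
by rewrite prodEFin -EFinM big_split.
Qed.
End Indep.
Section Layers.
Context (R : realType).

Definition cc (th h : R) (n : nat) : R :=
  if n == 0%N then 1 else expR (th * (n%:R * h)) - expR (th * (n.-1%:R * h)).
Definition BB (h : R) (n : nat) : set R :=
  if n == 0%N then setT else [set x | n.-1%:R * h < x].

Lemma cc_ge0 (th h : R) n : 0 <= th -> 0 <= h -> 0 <= cc th h n.
Proof.
move=> th0 h0; rewrite /cc; case: ifP => // /negbT n0.
rewrite subr_ge0 ler_expR; apply: ler_wpM2l => //; apply: ler_wpM2r => //.
by rewrite ler_nat leq_pred.
Qed.

Lemma BB_measurable h n : measurable (BB h n).
Proof.
rewrite /BB; case: ifP => // _.
have -> : [set x : R | n.-1%:R * h < x] = `]n.-1%:R * h, +oo[%classic.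
  by apply/seteqP; split => x /=; rewrite in_itv /= andbT.
exact: measurable_itv.
Qed.

Definition FF th h N (x : R) := \sum_(n < N.+1) cc th h n * \1_(BB h n) x.

Lemma FF_lb (th h : R) N (x : R) : 0 <= th -> 0 <= h ->
  1 <= FF th h N x /\ (forall y, y <= x -> y <= N%:R * h -> expR (th * y) <= FF th h N x).
Proof.
move=> th0 h0; elim: N => [|N [IH1 IH2]].
  rewrite /FF big_ord_recl big_ord0 addr0 /cc /BB /= indicE in_setT mulr1.
  split => //. move=> y _. rewrite mul0r => y0.
  rewrite -expR0 ler_expR; exact: mulr_ge0_le0.
rewrite /FF big_ord_recr /= -/(FF th h N x).
have c0 := @cc_ge0 th h N.+1 th0 h0.
split.
  by apply: le_trans IH1 _; rewrite lerDl mulr_ge0// indicE ler0n.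
move=> y yx yN.
have [Nx|xN] := ltP (N%:R * h) x.
- have := IH2 (N%:R * h) (ltW Nx) (lexx _).
  rewrite /BB /= indicE mem_set// mulr1 /cc /= => H.
  apply: le_trans (lerD H (lexx _)); rewrite addrC subrK ler_expR.
  by apply: ler_wpM2l.
- apply: le_trans (IH2 y yx (le_trans yx xN)) _.
  by rewrite lerDl mulr_ge0// indicE ler0n.
Qed.

End Layers.
Arguments cc {R}. Arguments BB {R}. Arguments FF {R}.
Section Layers2.
Context (R : realType).
Arguments cc {R}.

Definition pp (lam h : R) (n : nat) : R :=
  if n == 0%N then 1 else expR (- lam * (n.-1%:R * h)).

Lemma geo_le (q : R) N : 0 <= q -> (\sum_(k < N) q ^+ k) * (1 - q) <= 1.
Proof.
move=> q0; have := subrX1 q N.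
have -> : (\sum_(k < N) q ^+ k) * (1 - q) = - ((q - 1) * \sum_(k < N) q ^+ k).
  by rewrite mulrC -mulNr opprB.
move=> <-; rewrite opprB lerBlDr lerDl; exact: exprn_ge0.
Qed.

Lemma expy_bound (y : R) : 0 <= y -> (expR y - 1) * (1 - y) <= y.
Proof.
move=> y0; have H := expR_ge1Dx (- y).
have E : expR y * (1 - y) <= 1.
  rewrite -[X in _ <= X](expRxMexpNx_1 y) ler_pM2l ?expR_gt0 //.
have : expR y * (1 - y) - (1 - y) <= y by lra.
by rewrite -{2}[1 - y]mul1r -mulrBl.
Qed.

Lemma expz_bound (z : R) : 0 <= z -> expR (- z) * (1 + z) <= 1.
Proof.
move=> z0; have := expR_ge1Dx z => H.
rewrite -[X in _ <= X](expRxMexpNx_1 z) mulrC ler_pM2r ?expR_gt0 //.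
Qed.

Lemma GG_bound (th lam : R) N : 0 < th < 1 -> 1 <= lam ->
  \sum_(n < N.+1) cc th (th / lam) n * pp lam (th / lam) n <=
  1 + th / (lam * (1 - th) ^+ 2).
Proof.
move=> /andP[th0 th1] lam1.
have lam0 : 0 < lam by lra.
set h := th / lam.
have h0 : 0 <= h by rewrite /h divr_ge0 ?ltW.
set y := th * h.
set q := expR (y - lam * h).
have lamh : lam * h = th by rewrite /h mulrC divfK ?gt_eqF.
rewrite big_ord_recl /cc /pp /= mul1r lerD2l.
have E : forall k : 'I_N, cc th h (bump 0 k) * pp lam h (bump 0 k) = (expR y - 1) * q ^+ k.
  move=> k; rewrite /cc /pp /bump /= add1n /=.
  rewrite /q -expRM_natl mulrBl -!expRD mulrBl mul1r -expRD add0n.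
  congr (_ - _); congr (expR _); rewrite /y.
    rewrite -[k.+1]addn1 natrD; lra.
  lra.
rewrite (eq_bigr _ (fun k _ => E k)) -mulr_sumr.
set S := \sum_(k < N) q ^+ k.
have q0 : 0 <= q by rewrite /q expR_ge0.
have S0 : 0 <= S by rewrite /S sumr_ge0// => k _; exact: exprn_ge0.
have HS := @geo_le q N q0; rewrite -/S in HS.
have y0 : 0 <= y by exact: mulr_ge0 (ltW th0) h0.
have yle : y * lam = th ^+ 2 by rewrite /y -mulrA [h * lam]mulrC lamh expr2.
have HA := @expy_bound y y0.
set z := lam * h - y.
have z0 : th * (1 - th) <= z.
  rewrite /z lamh; have : y <= th ^+ 2 by nra.
  rewrite expr2; lra.
have z00 : 0 <= z by nra.
have Hq := @expz_bound z z00.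
have qz : q = expR (- z) by rewrite /q /z opprB.
rewrite -qz in Hq.
have ey0 : 0 <= expR y - 1 by rewrite subr_ge0 -expR0 ler_expR.
have A1 : (expR y - 1) * (lam * (1 - th ^+ 2)) <= th ^+ 2.
  have yth : y <= th ^+ 2 by rewrite -yle; nra.
  have B1 : (expR y - 1) * (1 - th ^+ 2) <= (expR y - 1) * (1 - y).
    by apply: ler_wpM2l => //; lra.
  have B1' := ler_wpM2l (ltW lam0) B1.
  have B2 := ler_wpM2l (ltW lam0) HA.
  set e := expR y - 1 in B1' B2 *.
  have -> : e * (lam * (1 - th ^+ 2)) = lam * (e * (1 - th ^+ 2)) by ring.
  apply: le_trans B1' _; apply: le_trans B2 _; by rewrite -yle mulrC.
have S1 : S * (th * (1 - th)) <= 1 + th.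
  have zth : z <= th by rewrite /z lamh; lra.
  have C1 : S * (th * (1 - th)) <= S * z by apply: ler_wpM2l.
  have D : (1 - q) * (1 + z) = 1 + z - q * (1 + z) by ring.
  have C2 : S * z <= S * ((1 - q) * (1 + z)) by apply: ler_wpM2l => //; lra.
  have C3 : (S * (1 - q)) * (1 + z) <= 1 * (1 + z) by apply: ler_wpM2r => //; lra.
  rewrite mulrA in C2; lra.
rewrite ler_pdivlMr; last by rewrite mulr_gt0 // exprn_gt0 // subr_gt0.
have P1 := mulr_ge0 ey0 S0.
have := ler_pM (mulr_ge0 ey0 (mulr_ge0 (ltW lam0) _)) (mulr_ge0 S0 _) A1 S1.
nra.
Qed.
End Layers2.
Arguments pp {R}.
Section Harm.
Context (R : realType).

Lemma prod_exp_bound K (G : nat -> R) (a : R) : 0 <= a ->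
  (forall i, 0 <= G i <= 1 + a / i.+1%:R) ->
  \prod_(i < K) G i <= expR (a * \sum_(i < K) (i.+1%:R)^-1).
Proof.
move=> a0 HG; rewrite mulr_sumr expR_sum; apply: ler_prod => i _.
have /andP[G0 G1] := HG i; rewrite G0 /=; apply: le_trans G1 _.
exact: expR_ge1Dx.
Qed.

Lemma harm K : (0 < K)%N -> expR (\sum_(i < K) (i.+1%:R : R)^-1 - 1) <= K%:R.
Proof.
case: K => // K _; elim: K => [|K IH].
  by rewrite big_ord_recl big_ord0 addr0 invr1 subrr expR0.
rewrite big_ord_recr /= addrAC expRD.
set u : R := (K.+2%:R)^-1.
have u0 : 0 <= u by rewrite /u invr_ge0 ler0n.
have Hu := @expy_bound R u u0.
have e0 : 0 <= expR u by exact: expR_ge0.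
have E1 : 1 - u = K.+1%:R / K.+2%:R.
  rewrite /u; apply: (@mulfI _ K.+2%:R); first by rewrite pnatr_eq0.
  rewrite mulrBr mulr1 mulfV ?pnatr_eq0 // mulrC divfK ?pnatr_eq0 //.
  by rewrite -natr1 addrK.
have H2 : expR u * K.+1%:R <= K.+2%:R.
  have : expR u * (1 - u) <= 1 by lra.
  rewrite E1 mulrA ler_pdivrMr ?ltr0n // mul1r //.
apply: le_trans (ler_wpM2r e0 IH) _; by rewrite mulrC.
Qed.

End Harm.
Section ProdLb.
Context (R : realType).
Lemma prod_lb (K : nat) (f x : nat -> R) (th m : R) : 0 <= th ->
  (forall i, (i < K)%N -> 1 <= f i) ->
  (forall i, (i < K)%N -> forall y, y <= x i -> y <= m -> expR (th * y) <= f i) ->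
  1 <= \prod_(i < K) f i /\
  forall y, 0 <= y -> y <= \sum_(i < K) x i -> y <= m -> expR (th * y) <= \prod_(i < K) f i.
Proof.
move=> th0; elim: K => [|K IH] H1 H2.
  rewrite big_ord0; split => // y y0; rewrite big_ord0 => y0' _.
  by rewrite (@le_anti _ _ y 0) ?y0 ?y0' // mulr0 expR0.
have [IH1 IH2] := IH (fun i iK => H1 i (ltnW iK)) (fun i iK => H2 i (ltnW iK)).
have fK1 := H1 K (ltnSn K).
have P0 : 0 <= \prod_(i < K) f i by lra.
rewrite big_ord_recr /=; split.
  by have := ler_pM ler01 ler01 IH1 fK1; rewrite mulr1.
move=> y y0; rewrite big_ord_recr /= => yS ym.
set S := \sum_(i < K) x i in yS IH2.
have [Sy|yS'] := leP y S.
- rewrite -[expR _]mulr1; exact: ler_pM (expR_ge0 _) ler01 (IH2 y y0 Sy ym) fK1.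
- have [S0|S0] := leP S 0.
  + rewrite -[expR _]mul1r; apply: ler_pM ler01 (expR_ge0 _) IH1 _.
    by apply: H2 => //; lra.
  + have -> : th * y = th * S + th * (y - S) by ring.
    rewrite expRD; apply: ler_pM; [exact: expR_ge0|exact: expR_ge0| |].
    * by apply: IH2; lra.
    * by apply: H2 => //; lra.
Qed.
End ProdLb.
Section Tail.
Context (R : realType) (d : measure_display) (T : measurableType d) (P : probability T R).
Context (X : nat -> T -> R) (mX : forall i, measurable_fun setT (X i))
  (indep : mutually_independent P X)
  (hexp : forall i (t : R), 0 <= t -> P [set w | t < X i w] = (expR (- i.+1%:R * t))%:E).

Lemma mT K : measurable_fun setT (fun w => \sum_(i < K) X i w).
Proof. by apply: measurable_sum => i; exact: mX. Qed.

Lemma tail_TK (th : R) (K : nat) (m : R) : 0 < th < 1 -> 0 <= m ->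
  (P [set w | (m < \sum_(i < K) X i w)%R] <=
   (expR (- (th * m)) * expR (th / (1 - th) ^+ 2 * \sum_(i < K) (i.+1%:R)^-1))%:E)%E.
Proof.
move=> /andP[th0 th1] m0.
set N := (Num.Def.trunc (m * K%:R / th)).+1.
pose hh (i : nat) := th / i.+1%:R.
have hh0 i : 0 <= hh i by rewrite /hh divr_ge0 ?ltW.
set A := [set w | m < \sum_(i < K) X i w].
have mA : measurable A.
  have -> : A = setT `&` (fun w => \sum_(i < K) X i w) @^-1` `]m, +oo[.
    by apply/seteqP; split => w /=; rewrite /A /= in_itv /= andbT // => -[].
  by apply: mT => //; exact: measurable_itv.
have Nhh i : (i < K)%N -> m <= N%:R * hh i.
  move=> iK; have := truncnS_gt (m * K%:R / th); rewrite -/N => HN.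
  rewrite /hh mulrA ler_pdivlMr ?ltr0n //.
  have : m * K%:R <= N%:R * th by rewrite -ler_pdivrMr //; exact: ltW.
  move=> H; apply: le_trans _ H.
  by rewrite ler_wpM2l // ler_nat.
have Hc i n : 0 <= cc th (hh i) n by apply: cc_ge0 => //; exact: ltW.
have HB i n : measurable (BB (hh i) n) by exact: BB_measurable.
have Hpt : forall w, A w -> expR (th * m) <=
    \prod_(i < K) \sum_(n < N.+1) cc th (hh i) n * \1_(BB (hh i) n) (X i w).
  move=> w Aw.
  have [_ +] := @prod_lb R K (fun i => FF th (hh i) N (X i w)) (fun i => X i w) th m (ltW th0)
     (fun i _ => (@FF_lb R th (hh i) N (X i w) (ltW th0) (hh0 i)).1)
     (fun i iK y y1 y2 => (@FF_lb R th (hh i) N (X i w) (ltW th0) (hh0 i)).2 y y1 (le_trans y2 (Nhh i iK))).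
  by move=> /(_ m m0 (ltW Aw) (lexx m)).
have HC := @chernoff_prod R d T P X mX indep K N.+1 (fun i n => cc th (hh i) n)
  (fun i n => BB (hh i) n) A (expR (th * m)) Hc HB mA (expR_ge0 _) Hpt.
have Hfine i n : fine (P (X i @^-1` BB (hh i) n)) = pp i.+1%:R (hh i) n.
  rewrite /BB /pp; case: ifP => _.
    by rewrite preimage_setT probability_setT.
  rewrite (_ : _ @^-1` _ = [set w | n.-1%:R * hh i < X i w]) //.
  by rewrite hexp //; apply: mulr_ge0 => //; exact: ler0n.
set a := th / (1 - th) ^+ 2.
have a0 : 0 <= a by apply: divr_ge0; [exact: ltW | apply: exprn_ge0; rewrite subr_ge0; exact: ltW].
have HG : \prod_(i < K) \sum_(n < N.+1) cc th (hh i) n * fine (P (X i @^-1` BB (hh i) n))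
    <= expR (a * \sum_(i < K) (i.+1%:R)^-1).
  under eq_bigr => i _ do under eq_bigr => n _ do rewrite Hfine.
  apply: (@prod_exp_bound R K (fun i => \sum_(n < N.+1) cc th (hh i) n * pp i.+1%:R (hh i) n)) => // i.
  apply/andP; split.
    apply: sumr_ge0 => n _; apply: mulr_ge0 => //.
    by rewrite /pp; case: ifP => // _; exact: expR_ge0.
  have := @GG_bound R th i.+1%:R N. rewrite -/(hh i).
  move=> /(_ _ _) H; apply: le_trans (H _ _) _.
  - by rewrite th0 th1.
  - by rewrite ler1n.
  - by rewrite /a invfM mulrA mulrAC.
have PA : P A = (fine (P A))%:E by rewrite fineK // fin_num_measure.
move: HC; rewrite PA -EFinM lee_fin => HC.
rewrite lee_fin -(ler_pM2l (expR_gt0 (th * m))) mulrA expRxMexpNx_1 mul1r.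
exact: le_trans HC HG.
Qed.
End Tail.
Section Birth.
Context (R : realType) (d : measure_display) (T : measurableType d).
Context (X : nat -> T -> R) (mX : forall i, measurable_fun setT (X i)).

Lemma mJ n : measurable_fun setT (jump_time X n).
Proof. by apply: measurable_sum => i; exact: mX. Qed.

Lemma birthE a w : birth_path X a w =
  (\sum_(n <oo) (\1_([set w | jump_time X n w <= a]) w : R)%:E)%E.
Proof.
rewrite /birth_path counting_dirac; apply: eq_eseriesr => n _.
by rewrite diracE indicE.
Qed.

Lemma mY a : measurable_fun setT (birth_path X a).
Proof.
rewrite (_ : birth_path X a = fun w => (\sum_(n <oo) (\1_([set w | jump_time X n w <= a]) w : R)%:E)%E); last first.
  by apply: funext => w; rewrite birthE.
apply: (@ge0_emeasurable_sum _ _ _ setT _ xpredT).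
  by move=> k x _ _; rewrite lee_fin indicE ler0n.
move=> k _; apply/measurable_EFinP; apply: measurable_indic.
rewrite (_ : [set w | jump_time X k w <= a] = setT `&` jump_time X k @^-1` `]-oo, a]).
  by apply: mJ => //; exact: measurable_itv.
by apply/seteqP; split => w /=; rewrite in_itv /= // => -[].
Qed.

Lemma mG a (c : R) : measurable [set w | (birth_path X a w <= c%:E)%E].
Proof. by rewrite -[X in measurable X]setTI; apply: emeasurable_fun_infty_c => //; exact: mY. Qed.

End Birth.
Section Birth2.
Context (R : realType) (d : measure_display) (T : measurableType d).
Context (X : nat -> T -> R).

Lemma Y_ge a w k : (forall n, (n <= k)%N -> jump_time X n w <= a) ->
  ((k.+1%:R)%:E <= birth_path X a w)%E.
Proof.
move=> H; rewrite birthE.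
apply: le_trans (nneseries_lim_ge k.+1 _); last by move=> n _ _; rewrite lee_fin indicE ler0n.
rewrite sumEFin lee_fin big_mkord.
rewrite (eq_bigr (fun _ => 1)); first by rewrite sumr_const card_ord.
move=> i _; rewrite indicE mem_set //=; apply: H; rewrite -ltnS; exact: ltn_ord.
Qed.

Lemma mono_T w k : (forall i, (i < k)%N -> 0 <= X i w) ->
  forall n, (n <= k)%N -> jump_time X n w <= jump_time X k w.
Proof.
elim: k => [|k IH] H n nk.
  by move: nk; rewrite leqn0 => /eqP ->.
move: nk; rewrite leq_eqVlt => /orP[/eqP -> //|nk].
apply: le_trans (IH (fun i ik => H i (ltnW ik)) n nk) _.
rewrite /jump_time big_ord_recr /= lerDl; exact: H.
Qed.

Lemma Y_tail a w (c : R) : 0 <= c ->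
  (forall i, (i < Num.Def.trunc c)%N -> 0 <= X i w) ->
  (birth_path X a w <= c%:E)%E -> a < jump_time X (Num.Def.trunc c) w.
Proof.
move=> c0 Hpos HY; rewrite ltNge; apply/negP => Tk.
have H1 : (((Num.Def.trunc c).+1%:R)%:E <= birth_path X a w)%E.
  by apply: Y_ge => n nk; apply: le_trans (@mono_T w _ Hpos n nk) Tk.
by have := le_trans H1 HY; rewrite lee_fin leNgt truncnS_gt.
Qed.

Lemma bigsetI_mem (s : seq nat) (F : nat -> set T) w :
  (\big[setI/setT]_(i <- s) F i) w -> forall i, i \in s -> F i w.
Proof.
elim: s => [|a s IH]; first by [].
rewrite big_cons => -[Fa Hs] i; rewrite in_cons => /orP[/eqP -> //|iis].
exact: IH.
Qed.
End Birth2.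
Section Birth3.
Context (R : realType) (d : measure_display) (T : measurableType d) (P : probability T R).
Context (X : nat -> T -> R) (mX : forall i, measurable_fun setT (X i))
  (indep : mutually_independent P X)
  (hpos : forall i, P [set w | (0 < X i w)%R] = 1%E).

Lemma PG_le a (c : R) : 0 <= c ->
  (P [set w | (birth_path X a w <= c%:E)%E] <=
   P [set w | (a < jump_time X (Num.Def.trunc c) w)%R])%E.
Proof.
move=> c0; set k := Num.Def.trunc c.
set Om := \big[setI/setT]_(i <- iota 0 k) (X i @^-1` `]0, +oo[%classic).
have mOm : measurable Om.
  apply: bigsetI_measurable => i _; rewrite -[X in measurable X]setTI.
  by apply: mX => //; exact: measurable_itv.
have POm : P Om = 1%E.
  rewrite /Om (indep (iota 0 k) (fun _ => `]0, +oo[%classic) (iota_uniq 0 k)); last by move=> _; exact: measurable_itv.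
  rewrite big1 // => i _.
  rewrite -(hpos i); congr (P _); apply/seteqP; split => w /=; by rewrite in_itv /= andbT.
have mTk : measurable [set w | a < jump_time X k w].
  rewrite (_ : [set w | _] = setT `&` jump_time X k @^-1` `]a, +oo[).
    by apply: mJ => //; exact: measurable_itv.
  by apply/seteqP; split => w /=; rewrite in_itv /= andbT // => -[].
have sub : [set w | (birth_path X a w <= c%:E)%E] `<=`
    [set w | a < jump_time X k w] `|` ~` Om.
  move=> w /= HY; have [Ow|NOw] := pselect (Om w); last by right.
  left; apply: Y_tail => // i ik; apply: ltW.
  have := @bigsetI_mem _ T _ _ w Ow i; rewrite mem_iota add0n ik /= in_itv /= andbT.
  by apply.
apply: le_trans (le_measure _ _ _ sub) _.
- by rewrite inE; exact: mG.
- by rewrite inE; apply: measurableU => //; exact: measurableC.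
apply: le_trans (measureU2 _ mTk (measurableC mOm)) _.
rewrite [X in (_ + X)%E](_ : _ = 0%E) ?adde0 //.
by apply: eq_trans (probability_setC P mOm) _; rewrite POm subee.
Qed.
End Birth3.
Section Main.
Context (R : realType) (d : measure_display) (T : measurableType d).
Context (X : nat -> T -> R) (mX : forall i, measurable_fun setT (X i)).

Lemma Y_mono a b w : a <= b -> (birth_path X a w <= birth_path X b w)%E.
Proof.
move=> ab; rewrite !birthE; apply: lee_nneseries => [i _ _|n _].
  by rewrite lee_fin indicE ler0n.
rewrite lee_fin !indicE.
have [/set_mem /= H|_] := boolP (w \in [set w | jump_time X n w <= a]).
  by rewrite mem_set //=; exact: le_trans H ab.
exact: ler0n.
Qed.

Lemma ineqY (dl s : R) (y : \bar R) :
  ((expR (- s))%:E * y <= (expR (- dl * s))%:E)%E -> (y <= (expR ((1 - dl) * s))%:E)%E.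
Proof.
case: y => [r| |] H.
- rewrite lee_fin; move: H; rewrite -EFinM lee_fin.
  have -> : expR (- dl * s) = expR (- s) * expR ((1 - dl) * s).
    by rewrite -expRD; congr expR; ring.
  by rewrite ler_pM2l ?expR_gt0.
- by move: H; rewrite mulry gtr0_sg ?expR_gt0 // mul1e leye_eq.
- by rewrite leNye.
Qed.

Lemma E_meas (dl M : R) : 0 < dl < 1 -> 0 < M ->
  measurable [set w | exists s : R, (M <= s)%R /\
     ((expR (- s))%:E * birth_path X s w <= (expR (- dl * s))%:E)%E].
Proof.
move=> /andP[dl0 dl1] M0.
have dl1' : 0 < 1 - dl by rewrite subr_gt0.
pose ak (k : nat) := Num.max M (ln (k%:R : R) / (1 - dl)).
rewrite (_ : [set w | _] = \bigcup_k [set w | (birth_path X (ak k) w <= (k%:R)%:E)%E]).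
  by apply: bigcupT_measurable => k; exact: mG.
apply/seteqP; split => w /=.
- move=> [s [Ms H]].
  have Hy := @ineqY dl s _ H.
  have [n Hn] : exists n : nat, birth_path X s w = (n%:R)%:E.
    move: Hy; rewrite /birth_path /counting; case: ifPn => _; last by rewrite leye_eq.
    by move=> _; eexists.
  rewrite Hn lee_fin in Hy.
  exists n => //.
  suff aks : ak n <= s by apply: le_trans (@Y_mono (ak n) s w aks) _; rewrite Hn.
  rewrite ge_max Ms /= ler_pdivrMr // mulrC.
  have [->|n0] := eqVneq n 0%N.
    rewrite ln0 //; apply: mulr_ge0; [exact: ltW|lra].
  have n0' : (0 : R) < n%:R by rewrite ltr0n lt0n.
  rewrite -[X in _ <= X](expRK) ler_ln ?posrE ?expR_gt0 //.
- move=> [k _ Hk]; exists (ak k); split; first by rewrite le_max lexx.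
  apply: le_trans (lee_wpmul2l _ Hk) _; first by rewrite lee_fin expR_ge0.
  rewrite -EFinM lee_fin.
  have -> : expR (- dl * ak k) = expR (- ak k) * expR ((1 - dl) * ak k).
    by rewrite -expRD; congr expR; ring.
  rewrite ler_pM2l ?expR_gt0 //.
  have [->|k0] := eqVneq k 0%N; first exact: expR_ge0.
  have k0' : (0 : R) < k%:R by rewrite ltr0n lt0n.
  rewrite -[X in X <= _](lnK (x := k%:R)) ?posrE // ler_expR.
  have : ln (k%:R : R) / (1 - dl) <= ak k by rewrite le_max lexx orbT.
  by rewrite ler_pdivrMr // mulrC.
Qed.

Lemma E_cover (dl M : R) : dl < 1 -> 0 < M ->
  [set w | exists s : R, (M <= s)%R /\
     ((expR (- s))%:E * birth_path X s w <= (expR (- dl * s))%:E)%E] `<=`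
  \bigcup_j [set w | (birth_path X (M + j%:R) w <= (expR ((1 - dl) * (M + j%:R + 1)))%:E)%E].
Proof.
move=> dl1 M0 w [s [Ms H]].
have sM : 0 <= s - M by rewrite subr_ge0.
set j := Num.Def.trunc (s - M).
have /andP[j1 j2] := truncn_itv sM; rewrite -/j in j1 j2.
exists j => //=.
apply: le_trans (@Y_mono (M + j%:R) s w _) _; first by lra.
apply: le_trans (@ineqY dl s _ H) _.
rewrite lee_fin ler_expR; rewrite -natr1 in j2.
apply: ler_wpM2l; lra.
Qed.

End Main.
Section Geo.
Context (R : realType).
Lemma geo_eseries (C g M : R) : 0 <= C -> 0 < g ->
  (\sum_(j <oo) (C * expR (- g * (M + j%:R)))%:E <=
   (C / (1 - expR (- g)) * expR (- g * M))%:E)%E.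
Proof.
move=> C0 g0.
set r := expR (- g).
have r0 : 0 <= r by exact: expR_ge0.
have r1 : r < 1 by rewrite /r -expR0 ltr_expR oppr_lt0.
apply: lime_le.
  by apply: is_cvg_nneseries => n _ _; rewrite lee_fin mulr_ge0 ?expR_ge0.
apply: nearW => n; rewrite sumEFin lee_fin.
have E j : C * expR (- g * (M + j%:R)) = C * expR (- g * M) * r ^+ j.
  by rewrite /r -expRM_natl -mulrA -expRD; congr (_ * expR _); ring.
rewrite (eq_bigr _ (fun j _ => E j)) -mulr_sumr.
rewrite [C / _ * _]mulrAC; apply: ler_wpM2l; first by rewrite mulr_ge0 ?expR_ge0.
rewrite big_mkord.
have := @geo_le R r n r0.
rewrite -ler_pdivlMr ?subr_gt0 //.
by rewrite div1r.
Qed.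
End Geo.
Theorem lemma5p12 (R : realType) (delta : R) :
  0 < delta < 1 / 2 ->
  exists C1 C2 M0 : R, [/\ 0 < C1, 0 < C2 & 0 < M0] /\
  forall (d : measure_display) (T : measurableType d) (P : probability T R)
         (H : nat -> {RV P >-> R}),
    yule_holding_times H ->
    forall M : R, M0 <= M ->
      (P [set w | exists s : R, (M <= s)%R /\
           ((expR (- s))%:E * birth_path (fun i => H i) s w
              <= (expR (- delta * s))%:E)%E]
      <= (C1 * expR (- C2 * M))%:E)%E.
Proof.
move=> /andP[dl0 dl2].
have dl1 : delta < 1 by lra.
set th := delta / 2.
have th0 : 0 < th by rewrite /th divr_gt0.
have th1 : th < 1 by rewrite /th; lra.
have th1' : 0 < 1 - th by rewrite subr_gt0.
set a := th / (1 - th) ^+ 2.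
have a0 : 0 <= a by apply: divr_ge0; [exact: ltW | exact: exprn_ge0 (ltW th1')].
set g := th - a * (1 - delta).
have g0 : 0 < g.
  rewrite /g /a subr_gt0 mulrAC ltr_pdivrMr ?exprn_gt0 // ltr_pM2l //.
  rewrite /th; nra.
set C0 := expR (a * (2 - delta)).
have r1 : 0 < 1 - expR (- g) by rewrite subr_gt0 -expR0 ltr_expR oppr_lt0.
exists (C0 / (1 - expR (- g))), g, 1; split.
  by split => //; apply: divr_gt0 => //; exact: expR_gt0.
move=> d T P H [indep hdist] M M1.
pose X := fun i => (H i : T -> R).
have mX i : measurable_fun setT (X i) by exact: measurable_funP.
have hpos i : P [set w | (0 < X i w)%R] = 1%E := (hdist i).1.
have hexp i (t : R) : 0 <= t -> P [set w | (t < X i w)%R] = (expR (- i.+1%:R * t))%:E.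
  exact: (hdist i).2.
have M0 : 0 < M by lra.
have mE := @E_meas R d T X mX delta M (introT andP (conj dl0 dl1)) M0.
apply: le_trans (measure_sigma_subadditive P _ mE (@E_cover R d T X delta M dl1 M0)) _.
  by move=> j; exact: mG.
apply: le_trans _ (@geo_eseries R C0 g M (ltW (expR_gt0 _)) g0).
apply: lee_nneseries => [j _ _|j _]; first exact: measure_ge0.
set m := M + j%:R.
have m0 : 0 <= m by rewrite /m; apply: addr_ge0; [exact: ltW|exact: ler0n].
set c := expR ((1 - delta) * (m + 1)).
have c1 : 1 <= c.
  apply: le_trans (expR_ge1Dx _); rewrite lerDl; apply: mulr_ge0; lra.
have c0 : 0 <= c by lra.
apply: le_trans (@PG_le R d T P X mX indep hpos m c c0) _.
set k := Num.Def.trunc c.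
apply: le_trans (@tail_TK R d T P X mX indep hexp th k m (introT andP (conj th0 th1)) m0) _.
rewrite lee_fin -expRD /C0 -expRD ler_expR -/a.
have /andP[kc ck] := truncn_itv c0; rewrite -/k in kc ck.
have k0 : (0 < k)%N.
  rewrite lt0n; apply/negP => /eqP k0; rewrite k0 in ck; lra.
have Hh := @harm R k k0.
have Hk : \sum_(i < k) (i.+1%:R : R)^-1 - 1 <= (1 - delta) * (m + 1).
  by rewrite -ler_expR; apply: le_trans Hh _.
have := ler_wpM2l a0 Hk.
rewrite /g; nra.
Qed.
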